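(* Let $\Gamma=(V,E)$ be a finite simple graph with $V=\{1,\dots,n\}$ and let $A_\Gamma^+$ be the associated right-angled Artin monoid. Let $F\subset A_\Gamma^+$ be a finite subset such that $\vee F\neq\infty$, i.e. $\bigcap_{x\in F} xA_\Gamma^+\neq\emptyset$. Suppose $I\in V$ is an initial vertex of some $x\in F$. Then for each $y\in F$, either $I$ is an initial vertex of $y$, or $I$ is adjacent in $\Gamma$ to every vertex $I(y_j)$ of every syllable $y_j$ of $y$.
   Context: The right-angled Artin monoid is $A_\Gamma^+=\langle e_1,\dots,e_n : e_ie_j=e_je_i \text{ whenever } ij\in E\rangle$, with identity $1$. Every $x\neq 1$ can be written $x=x_1x_2\cdots x_m$ with syllables $x_j=e_{i_j}^{a_j}$, $a_j\ge 1$; the vertex of the syllable $x_j$ is $I(x_j)=i_j$. A shuffle of such an expression swaps two adjacent syllables $x_j,x_{j+1}$ whose vertices are adjacent in $\Gamma$; an amalgamation merges two consecutive syllables with the same vertex into one. An expression is reduced if no sequence of shuffles produces an expression admitting an amalgamation. A vertex $i$ is an initial vertex of $x$ if some reduced expression $x=x_1\cdots x_m$ has $x_1=e_i^{a_1}$ with $a_1\ge1$. For a finite $F\subset A_\Gamma^+$, one writes $\vee F=\infty$ if $\bigcap_{x\in F}xA_\Gamma^+=\emptyset$; otherwise this intersection equals $rA_\Gamma^+$ for a unique $r$, and $\vee F=r$. *)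

(* Defs.v *)
From Stdlib Require Import Relations.
From mathcomp Require Import all_boot.
Set Implicit Arguments. Unset Strict Implicit. Unset Printing Implicit Defensive.

(* Vertices are 'I_n (= {1,...,n} shifted to {0,...,n-1}).
   A finite simple graph is given by an adjacency relation adj : rel 'I_n
   which is symmetric and irreflexive. *)
Definition simple_graph n (adj : rel 'I_n) : Prop :=
  (forall i j, adj i j = adj j i) /\ (forall i, adj i i = false).

(* Elements of the right-angled Artin monoid A_Gamma^+ are represented by words
   (seq of generators e_i, written as i) modulo the congruence generated by
   the defining relations e_i e_j = e_j e_i for ij in E. *)
Inductive wstep n (adj : rel 'I_n) : seq 'I_n -> seq 'I_n -> Prop :=
| WStep u v i j : adj i j -> wstep adj (u ++ [:: i; j] ++ v) (u ++ [:: j; i] ++ v).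

Definition weq n (adj : rel 'I_n) : seq 'I_n -> seq 'I_n -> Prop :=
  clos_refl_sym_trans _ (@wstep n adj).

Definition in_right_ideal n (adj : rel 'I_n) (x z : seq 'I_n) : Prop :=
  exists w, weq adj z (x ++ w).

Definition join_finite n (adj : rel 'I_n) (F : seq (seq 'I_n)) : Prop :=
  exists z, forall x, x \in F -> in_right_ideal adj x z.

(* Syllable expressions: a syllable (i, a) stands for e_i^a, with a >= 1. *)
Definition syl_expr n := seq ('I_n * nat).

Definition is_expr n (s : syl_expr n) : Prop := all (fun p => 0 < p.2) s.

Definition eval_expr n (s : syl_expr n) : seq 'I_n :=
  flatten [seq nseq p.2 p.1 | p <- s].

Definition expr_of n (adj : rel 'I_n) (s : syl_expr n) (x : seq 'I_n) : Prop :=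
  is_expr s /\ weq adj (eval_expr s) x.

Inductive shuffle n (adj : rel 'I_n) : syl_expr n -> syl_expr n -> Prop :=
| Shuffle u v p q : adj p.1 q.1 -> shuffle adj (u ++ [:: p; q] ++ v) (u ++ [:: q; p] ++ v).

Definition admits_amalg n (s : syl_expr n) : Prop :=
  exists u v p q, s = u ++ [:: p; q] ++ v /\ p.1 = q.1.

Definition reduced n (adj : rel 'I_n) (s : syl_expr n) : Prop :=
  forall t, clos_refl_trans _ (@shuffle n adj) s t -> ~ admits_amalg t.

Definition initial_vertex n (adj : rel 'I_n) (i : 'I_n) (x : seq 'I_n) : Prop :=
  exists a s, 0 < a /\ expr_of adj ((i, a) :: s) x /\ reduced adj ((i, a) :: s).

(* Main.v *)
Require Import Defs.
From mathcomp Require Import all_boot.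
From Stdlib Require Import Relations Classical.

Section Aux.
Variables (n : nat) (adj : rel 'I_n).
Hypothesis adjC : forall i j, adj i j = adj j i.
Hypothesis adjI : forall i, adj i i = false.

Lemma wstep_sym a b : wstep adj a b -> wstep adj b a.
Proof. case=> u v i j h; constructor; by rewrite adjC. Qed.

Lemma wstep_cong c d a b : wstep adj a b -> wstep adj (c ++ a ++ d) (c ++ b ++ d).
Proof.
case=> u v i j h.
have E : forall x y, c ++ (u ++ [:: x; y] ++ v) ++ d = (c ++ u) ++ [:: x; y] ++ (v ++ d).
  by move=> x y; rewrite -!catA.
by rewrite !E; constructor.
Qed.

Lemma weq_cong c d a b : weq adj a b -> weq adj (c ++ a ++ d) (c ++ b ++ d).
Proof.
elim=> [x y /(@wstep_cong c d _ _) h|x|x y _ h|x y z _ h1 _ h2].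
- exact: rst_step.
- exact: rst_refl.
- exact: rst_sym.
- exact: rst_trans h2.
Qed.

Lemma weq_mem a b : weq adj a b -> forall x, (x \in a) = (x \in b).
Proof.
elim=> [x y h|//|x y _ h|x y z _ h1 _ h2] w.
- by case: h => u v i j _; rewrite !mem_cat !inE (orbC (w == i)).
- by rewrite h.
- by rewrite h1 h2.
Qed.

Lemma swap1 i j b : adj i j -> weq adj (i :: nseq b j) (nseq b j ++ [:: i]).
Proof.
move=> h; elim: b => [|b IH] /=; first exact: rst_refl.
apply: rst_trans (_ : weq adj (j :: i :: nseq b j) _).
  by apply: rst_step; apply: (@WStep _ _ [::] (nseq b j) i j).
by have := weq_cong [:: j] [::] _ _ IH; rewrite !cats0.
Qed.

Lemma swapn i j a b : adj i j ->
  weq adj (nseq a i ++ nseq b j) (nseq b j ++ nseq a i).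
Proof.
move=> h; elim: a => [|a IH] /=; first by rewrite cats0; exact: rst_refl.
apply: rst_trans (_ : weq adj (i :: nseq b j ++ nseq a i) _).
  by have := weq_cong [:: i] [::] _ _ IH; rewrite !cats0.
have := weq_cong [::] (nseq a i) _ _ (@swap1 i j b h).
by rewrite /= -catA.
Qed.

Lemma eval_cat (s t : syl_expr n) : eval_expr (s ++ t) = eval_expr s ++ eval_expr t.
Proof. by rewrite /eval_expr map_cat flatten_cat. Qed.

Lemma eval_cons (p : 'I_n * nat) s : eval_expr (p :: s) = nseq p.2 p.1 ++ eval_expr s.
Proof. by []. Qed.

Lemma shuffle_expr a b y : shuffle adj a b -> expr_of adj a y ->
  expr_of adj b y /\ size a = size b.
Proof.
case=> u v p q h [ea wa]; split; last by rewrite !size_cat.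
split.
  move: ea; rewrite /is_expr !all_cat /=.
  by case/and3P => -> /and3P [-> -> _] ->.
apply: rst_trans wa; apply: rst_sym.
have e0 : eval_expr (n:=n) [::] = [::] by [].
rewrite !eval_cat !eval_cons e0 !cats0; apply: weq_cong; exact: swapn.
Qed.

Lemma shuffles_expr a b y : clos_refl_trans _ (@shuffle n adj) a b -> expr_of adj a y ->
  expr_of adj b y /\ size a = size b.
Proof.
elim=> [x z h|x|x z w _ h1 _ h2] e; first exact: shuffle_expr.
- by [].
- by case: (h1 e) => e1 s1; case: (h2 e1) => e2 s2; rewrite s1.
Qed.

Lemma min_ex (P : nat -> Prop) m : P m -> exists k, P k /\ forall j, P j -> k <= j.
Proof.
elim/ltn_ind: m => m IH Pm.
case: (classic (exists j, P j /\ j < m)) => [[j [Pj ltj]]|H]; first exact: IH ltj Pj.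
exists m; split=> // j Pj; rewrite leqNgt; apply/negP => ltj; apply: H; by exists j.
Qed.

Lemma min_reduced (s : syl_expr n) y : expr_of adj s y ->
  (forall t, expr_of adj t y -> size s <= size t) -> reduced adj s.
Proof.
move=> es hmin t hst [u [v [p [q [Et Epq]]]]].
have [et st] := @shuffles_expr _ _ _ hst es.
set t' := u ++ (p.1, p.2 + q.2) :: v.
have : expr_of adj t' y.
  move: et; rewrite Et /expr_of /is_expr !all_cat /= => -[/and3P [h1 /and3P [h2 h3 _] h4] w].
  split; first by rewrite h1 h4 addn_gt0 h2.
  by move: w; rewrite !eval_cat !eval_cons /= nseqD Epq catA -catA -catA.
move/hmin; rewrite st Et /t' !size_cat /= => h.
by move: h; rewrite leq_add2l add2n ltnn.
Qed.

Variable I : 'I_n.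

Fixpoint Pf (w : seq 'I_n) : bool :=
  if w is a :: w' then (a == I) || (adj I a && Pf w') else false.

Lemma Pf_step a b : wstep adj a b -> Pf a -> Pf b.
Proof.
case=> u v i j h; elim: u => [|c u IH] /=; last first.
  by case/orP=> [->//|/andP [-> /IH ->]]; rewrite orbT.
case: (eqVneq i I) => [ei|ni].
  by move=> _; rewrite -ei h /= orbT.
case: (eqVneq j I) => [ej|nj] /=.
  by [].
by case/and3P => -> -> ->.
Qed.

Lemma Pf_weq a b : weq adj a b -> Pf a = Pf b.
Proof.
elim=> [x y h|//|x y _ h|x y z _ h1 _ h2]; last by rewrite h1.
- apply/idP/idP; [exact: Pf_step | apply: Pf_step; exact: wstep_sym].
- by [].
Qed.

Lemma Pf_cat u r : Pf (u ++ r) -> Pf u \/ all (adj I) u.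
Proof.
elim: u => [|c u IH] /=; first by right.
case/orP=> [->|/andP [-> /IH [->|->]]]; by [left|left; rewrite orbT|right].
Qed.

Lemma Pf_nseq k a r : a != I -> Pf (nseq k a ++ r) -> Pf r.
Proof. move=> na; elim: k => [//|k IH] /=; by rewrite (negPf na) /= => /andP [_ /IH]. Qed.

Lemma Pf_split (s : syl_expr n) : is_expr s -> Pf (eval_expr s) ->
  exists s1 p s2, s = s1 ++ p :: s2 /\ p.1 = I /\ all (fun q => adj I q.1) s1.
Proof.
elim: s => [//|q s IH] /= /andP [q0 es].
rewrite eval_cons; case: q q0 => qi [//|k] _ /=.
case: (eqVneq qi I) => [->|ni] /=.
  by move=> _; exists [::], (I, k.+1), s.
case/andP=> aq /(@Pf_nseq _ _ _ ni) /(IH es) [s1 [p [s2 [-> [p1 a1]]]]].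
by exists ((qi, k.+1) :: s1), p, s2; rewrite /= aq a1.
Qed.

Lemma shuffle_pre c a b : clos_refl_trans _ (@shuffle n adj) a b ->
  clos_refl_trans _ (@shuffle n adj) (c ++ a) (c ++ b).
Proof.
elim=> [x y [u v p q h]|x|x y z _ h1 _ h2].
- apply: rt_step.
  have E : forall x y, c ++ (u ++ [:: x; y] ++ v) = (c ++ u) ++ [:: x; y] ++ v.
    by move=> x' y'; rewrite -!catA.
  by rewrite !E; constructor.
- exact: rt_refl.
- exact: rt_trans h2.
Qed.

Lemma to_front s1 (p : 'I_n * nat) s2 : p.1 = I -> all (fun q => adj I q.1) s1 ->
  clos_refl_trans _ (@shuffle n adj) (s1 ++ p :: s2) (p :: s1 ++ s2).
Proof.
move=> p1; elim: s1 => [|q s1 IH] /=; first by move=> _; apply: rt_refl.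
case/andP=> aq /IH h.
apply: rt_trans (shuffle_pre [:: q] _ _ h) _.
apply: rt_step; apply: (@Shuffle _ _ [::] (s1 ++ s2) q p).
by rewrite p1 adjC.
Qed.

Lemma Pf_initial y : Pf y -> initial_vertex adj I y.
Proof.
move=> Py.
have e0 : expr_of adj [seq (i, 1) | i <- y] y.
  split; first by rewrite /is_expr all_map; apply/allP.
  have -> : eval_expr [seq (i, 1) | i <- y] = y.
    by elim: y {Py} => //= a y IH; rewrite eval_cons /= IH.
  exact: rst_refl.
have [m [[s [sm es]] hm]] :=
  @min_ex (fun m => exists s, size s = m /\ expr_of adj s y) _ (ex_intro _ _ (conj erefl e0)).
have rs : reduced adj s.
  apply: (@min_reduced _ _ es) => t et; rewrite sm; apply: hm; by exists t.
have := es => -[ies wes].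
have : Pf (eval_expr s) by rewrite (Pf_weq _ _ wes).
case/(@Pf_split _ ies) => s1 [p [s2 [Es [p1 a1]]]].
have hf := @to_front s1 p s2 p1 a1; rewrite -Es in hf.
have [et _] := @shuffles_expr _ _ _ hf es.
have rt : reduced adj (p :: s1 ++ s2).
  by move=> t ht; apply: rs; apply: rt_trans ht.
have p2 : 0 < p.2.
  by case: et => /andP [].
exists p.2, (s1 ++ s2); split=> //.
by rewrite -p1 -surjective_pairing.
Qed.

End Aux.

Theorem lemma2p2 (n : nat) (adj : rel 'I_n) (F : seq (seq 'I_n)) (I : 'I_n) :
  simple_graph adj ->
  join_finite adj F ->
  (exists2 x, x \in F & initial_vertex adj I x) ->
  forall y, y \in F ->
    initial_vertex adj I y \/
    (forall s, expr_of adj s y -> reduced adj s ->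
       forall p, p \in s -> adj I p.1).
Proof.
move=> [adjC adjI] [z hz] [x xF [a [s [a0 [[_ wx] _]]]]] y yF.
have [w1 h1] := hz x xF.
have [w2 h2] := hz y yF.
have Pz : @Pf n adj I z.
  rewrite (Pf_weq _ _ adjC I _ _ h1).
  have w := weq_cong _ _ [::] w1 _ _ wx; rewrite /= in w.
  rewrite -(Pf_weq _ _ adjC I _ _ w).
  rewrite eval_cons; case: (a) a0 => //= a' _; by rewrite eqxx.
rewrite (Pf_weq _ _ adjC I _ _ h2) in Pz.
case: (Pf_cat _ _ _ _ _ Pz) => [Py|ay]; first by left; exact: Pf_initial _ _ adjC _ _ Py.
right=> t [et wt] _ p pt.
have : p.1 \in y.
  rewrite -(weq_mem _ _ _ _ wt); move/allP: et => /(_ p pt).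
  move=> p2; elim: (t) pt => [//|q t' IH]; rewrite inE eval_cons mem_cat.
  case/orP=> [/eqP Epq|/IH ->]; last by rewrite orbT.
  by rewrite Epq in p2 *; rewrite mem_nseq p2 eqxx.
by move/allP: ay; apply.
Qed.
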